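(* Fix a nonempty $A\subseteq S$ and $w\in A$, and let $E_0=\{\tau_{\mathcal E_N^w}=\tau_{\mathcal E_N(A)}\}$. Let $x,y\in S$ be distinct with $r(x,y)>r(y,x)=0$. Then, as $N\to\infty$, $$\big|\mathbb P_{\zeta_1^{x,y}}[E_0]-\mathbb P_{\xi_N^y}[E_0]\big|=O(d_N\log N)\quad\text{and}\quad\big|\mathbb P_{\zeta_{N-1}^{x,y}}[E_0]-\mathbb P_{\xi_N^y}[E_0]\big|=O(d_N).$$
   Context: $S$ is finite; $r:S\times S\to[0,\infty)$, $r(x,x)=0$, are the rates of an irreducible continuous-time Markov chain on $S$. $\mathcal H_N=\{\eta\in\{0,1,2,\dots\}^S:\sum_x\eta_x=N\}$; $\sigma^{x,y}\eta$ moves one particle from $x$ to $y$ (if $\eta_x\ge1$; else $\sigma^{x,y}\eta=\eta$). With $d_N>0$, $d_N\to0$, the inclusion process is the Markov chain on $\mathcal H_N$ with generator $(\mathcal L_NF)(\eta)=\sum_{x\ne y}\eta_x(d_N+\eta_y)r(x,y)\{F(\sigma^{x,y}\eta)-F(\eta)\}$; $\mathbb P_\eta$ its law from $\eta$; $\tau_{\mathcal C}$ the hitting time of $\mathcal C\subseteq\mathcal H_N$. $\xi_N^z$: all $N$ particles at $z$; $\mathcal E_N^z=\{\xi_N^z\}$, $\mathcal E_N(A)=\bigcup_{z\in A}\mathcal E_N^z$. For $0\le i\le N$, $\zeta_i^{x,y}$ is the configuration with $N-i$ particles at $x$, $i$ at $y$, none elsewhere. $O(\cdot)$ has constant independent of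 $N$. *)

(* Defs.v *)
From HB Require Import structures.
From mathcomp Require Import all_boot all_order all_algebra.
From mathcomp Require Import all_classical all_reals all_analysis.
Set Implicit Arguments. Unset Strict Implicit. Unset Printing Implicit Defensive.
Import Order.TTheory GRing.Theory Num.Theory numFieldNormedType.Exports.
Local Open Scope ring_scope.

Section Inclusion.
Variables (R : realType) (S : finType).

Definition config := {ffun S -> nat}.

Definition sigma (x y : S) (eta : config) : config :=
  if (0 < eta x)%N then
    [ffun z => if z == x then (eta z).-1
               else if z == y then (eta z).+1 else eta z]
  else eta.

Definition xi (N : nat) (z : S) : config := [ffun u => if u == z then N else 0%N].

Definition zeta (N i : nat) (x y : S) : config :=
  [ffun u => if u == x then (N - i)%N else if u == y then i else 0%N].

(* jump rate eta -> sigma^{x,y} eta of the inclusion process with parameter dN *)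
Definition irate (r : S -> S -> R) (dN : R) (eta : config) (x y : S) : R :=
  (eta x)%:R * (dN + (eta y)%:R) * r x y.

Definition totrate (r : S -> S -> R) (dN : R) (eta : config) : R :=
  \sum_(x : S) \sum_(y : S | y != x) irate r dN eta x y.

Definition inEA (N : nat) (A : {set S}) (eta : config) : bool :=
  [exists z in A, eta == xi N z].

(* p_n(eta) = probability that the (jump chain of the) inclusion process
   started at eta reaches E_N(A) within n jumps and that the first visited
   point of E_N(A) is xi_N^w. *)
Fixpoint hit_approx (r : S -> S -> R) (dN : R) (N : nat) (A : {set S}) (w : S)
    (n : nat) (eta : config) : R :=
  if inEA N A eta then (eta == xi N w)%:R
  else match n with
       | 0%N => 0
       | n'.+1 =>
         (\sum_(x : S) \sum_(y : S | y != x)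
             irate r dN eta x y * hit_approx r dN N A w n' (sigma x y eta))
           / totrate r dN eta
       end.

Definition hitprob (r : S -> S -> R) (dN : R) (N : nat) (A : {set S}) (w : S)
    (eta : config) : R :=
  limn (fun n => hit_approx r dN N A w n eta).

Definition irreducible_rates (r : S -> S -> R) : Prop :=
  forall x y : S, connect [rel a b | 0 < r a b] x y.

End Inclusion.

(* Main.v *)
Require Import Defs.
From HB Require Import structures.
From mathcomp Require Import all_boot all_order all_algebra.
From mathcomp Require Import all_classical all_reals all_analysis.
From mathcomp Require Import ring lra zify.
Import Order.TTheory GRing.Theory Num.Theory numFieldNormedType.Exports.
Local Open Scope classical_set_scope.
Local Open Scope ring_scope.

Section Aux.
Variables (R : realType) (S : finType) (r : S -> S -> R) (dN : R) (N : nat)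
  (A : {set S}) (w : S).
Hypothesis r_ge0 : forall a b, 0 <= r a b.
Hypothesis dN_gt0 : 0 < dN.

Local Notation f := (hit_approx r dN N A w).

Lemma ha_S n eta : f n.+1 eta = if inEA N A eta then (eta == xi N w)%:R
  else (\sum_(x : S) \sum_(y : S | y != x)
             irate r dN eta x y * f n (sigma x y eta)) / totrate r dN eta.
Proof. by []. Qed.

Lemma irate_ge0 eta a b : 0 <= irate r dN eta a b.
Proof.
rewrite /irate; apply: mulr_ge0; last exact: r_ge0.
by apply: mulr_ge0 => //; apply: addr_ge0 => //; apply: ltW.
Qed.

Lemma totrate_ge0 eta : 0 <= totrate r dN eta.
Proof. by apply: sumr_ge0 => a _; apply: sumr_ge0 => b _; exact: irate_ge0. Qed.

Lemma div_le1 (s t : R) : 0 <= s -> s <= t -> s / t <= 1.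
Proof.
move=> s0 st; have [->|t0] := eqVneq t 0; first by rewrite invr0 mulr0.
have tp : 0 < t by rewrite lt_def t0 (le_trans s0 st).
by rewrite ler_pdivrMr // mul1r.
Qed.

Lemma ha_bounds n eta : 0 <= f n eta <= 1.
Proof.
elim: n eta => [|n IH] eta.
  rewrite /=; case: ifP => _; last by rewrite lexx ler01.
  by case: (_ == _); rewrite ?lexx ?ler01.
rewrite ha_S; case: ifP => _; first by case: (_ == _); rewrite ?lexx ?ler01.
have s0 : 0 <= \sum_(x : S) \sum_(y : S | y != x)
             irate r dN eta x y * f n (sigma x y eta).
  apply: sumr_ge0 => a _; apply: sumr_ge0 => b _.
  by apply: mulr_ge0; [exact: irate_ge0|case/andP: (IH (sigma a b eta))].
apply/andP; split; first by apply: divr_ge0 => //; exact: totrate_ge0.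
apply: div_le1 => //; apply: ler_sum => a _; apply: ler_sum => b _.
rewrite -[leRHS]mulr1; apply: ler_wpM2l; first exact: irate_ge0.
by case/andP: (IH (sigma a b eta)).
Qed.

Lemma ha_mono n eta : f n eta <= f n.+1 eta.
Proof.
elim: n eta => [|n IH] eta.
  have := ha_bounds 1 eta; rewrite ha_S /=; case: ifP => _ //.
  by case/andP.
rewrite ha_S [X in _ <= X]ha_S; case: ifP => _ //.
apply: ler_wpM2r; first by rewrite invr_ge0; exact: totrate_ge0.
apply: ler_sum => a _; apply: ler_sum => b _.
by apply: ler_wpM2l; [exact: irate_ge0| exact: IH].
Qed.

Lemma ha_cvg eta : (fun n => f n eta) @ \oo --> hitprob r dN N A w eta.
Proof.
have c : cvgn (fun n => f n eta).
  apply: nondecreasing_is_cvgn.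
    by apply/nondecreasing_seqP => n; exact: ha_mono.
  by exists 1 => _ [n _ <-]; case/andP: (ha_bounds n eta).
exact: c.
Qed.


Lemma ha_step n eta eta' a0 b0 (g : S -> S -> R) :
  ~~ inEA N A eta -> sigma a0 b0 eta = eta' -> b0 != a0 ->
  0 < irate r dN eta a0 b0 ->
  (forall a b, 0 <= g a b) ->
  (forall a b, b != a -> (a, b) != (a0, b0) -> irate r dN eta a b <= g a b) ->
  `| f n.+1 eta - f n eta' | <=
     (\sum_(a : S) \sum_(b : S | b != a) g a b) / irate r dN eta a0 b0.
Proof.
move=> nE hs hab i0 g0 hg.
set T := totrate r dN eta.
have iT : irate r dN eta a0 b0 <= T.
  rewrite /T /totrate (bigD1 a0) //= (bigD1 b0) //= -addrA lerDl.
  apply: addr_ge0; first by apply: sumr_ge0 => b _; exact: irate_ge0.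
  by apply: sumr_ge0 => a _; apply: sumr_ge0 => b _; exact: irate_ge0.
have T0 : 0 < T by apply: lt_le_trans iT.
have -> : f n eta' = (\sum_(a : S) \sum_(b : S | b != a)
             irate r dN eta a b * f n eta') / T.
  under [in RHS]eq_bigr do rewrite -mulr_suml.
  by rewrite -mulr_suml -/(totrate r dN eta) -/T mulrAC divff ?mul1r // gt_eqF.
rewrite ha_S (negbTE nE) -mulrBl -sumrB.
under eq_bigr do rewrite -sumrB.
rewrite -/T normrM [`|T^-1|]ger0_norm; last by rewrite invr_ge0 ltW.
apply: (@le_trans _ _ ((\sum_(a : S) \sum_(b : S | b != a) g a b) / T)).
  apply: ler_wpM2r; first by rewrite invr_ge0 ltW.
  apply: (le_trans (ler_norm_sum _ _ _)); apply: ler_sum => a _.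
  apply: (le_trans (ler_norm_sum _ _ _)); apply: ler_sum => b hb.
  rewrite -mulrBr normrM ger0_norm; last exact: irate_ge0.
  have [e|ne] := eqVneq (a, b) (a0, b0).
    by case: e => -> ->; rewrite hs subrr normr0 mulr0.
  apply: le_trans (hg a b hb ne); rewrite -[leRHS]mulr1.
  apply: ler_wpM2l; first exact: irate_ge0.
  case/andP: (ha_bounds n (sigma a b eta)) => h1 h2.
  case/andP: (ha_bounds n eta') => h3 h4.
  rewrite ler_norml; apply/andP; split; lra.
apply: ler_wpM2l.
  by apply: sumr_ge0 => a _; apply: sumr_ge0 => b _.
by rewrite lef_pV2 ?posrE.
Qed.


Variables (x y : S).
Hypotheses (xy : x != y) (ryx : r y x = 0) (rxy : 0 < r x y).

Lemma sigma_zeta k : (k < N)%N -> sigma x y (zeta N k x y) = zeta N k.+1 x y.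
Proof.
move=> kN; rewrite /sigma !ffunE eqxx subn_gt0 kN; apply/ffunP => u.
rewrite !ffunE.
have [eux|ux] := eqVneq u x.
  subst u; lia.
by case: eqVneq.
Qed.

Lemma zeta_notEA k : (0 < k < N)%N -> ~~ inEA N A (zeta N k x y).
Proof.
move=> /andP[k0 kN]; apply/existsP => -[z /andP[_ /eqP e]].
have := congr1 (fun g : config S => g x) e; rewrite /= !ffunE eqxx.
by case: (x == z); lia.
Qed.

Lemma zeta_sum k : (k <= N)%N -> \sum_a ((zeta N k x y a)%:R : R) = N%:R.
Proof.
move=> kN; rewrite (bigD1 x) //= (bigD1 y) 1?eq_sym //= big1.
  by rewrite !ffunE eqxx [y == x]eq_sym (negbTE xy) eqxx addr0 -natrD subnK.
move=> u /andP[uy ux]; by rewrite ffunE (negbTE ux) (negbTE uy).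
Qed.

Lemma irate_zeta_le k a b : b != a -> (a, b) != (x, y) ->
  irate r dN (zeta N k x y) a b <= dN * (zeta N k x y a)%:R * r a b.
Proof.
move=> ba ne; rewrite /irate mulrDr mulrDl [_ * dN]mulrC.
suff -> : ((zeta N k x y a)%:R * (zeta N k x y b)%:R * r a b = 0 :> R) by rewrite addr0.
rewrite !ffunE.
have [eax|nax] := eqVneq a x.
  subst a; have [eby|nby] := eqVneq b y; first by subst b; rewrite eqxx in ne.
  by rewrite (negbTE ba) ?(negbTE nby) mulr0 mul0r.
have [eay|nay] := eqVneq a y.
  subst a; have [ebx|nbx] := eqVneq b x; first by subst b; rewrite ryx mulr0.
  by rewrite (negbTE ba) ?(negbTE nbx) ?eqxx mulr0 mul0r.
by rewrite mul0r mul0r.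
Qed.

Definition Mr := \sum_a \sum_b r a b.

Lemma Mr_ge0 : 0 <= Mr.
Proof. by apply: sumr_ge0 => a _; apply: sumr_ge0 => b _. Qed.

Lemma step_zeta n k : (0 < k < N)%N ->
  `| f n.+1 (zeta N k x y) - f n (zeta N k.+1 x y) | <=
    dN * N%:R * Mr / ((N - k)%:R * k%:R * r x y).
Proof.
move=> /andP[k0 kN].
set g := fun a b => dN * (zeta N k x y a)%:R * r a b.
have g0 : forall a b, 0 <= g a b.
  by move=> a b; rewrite /g; apply: mulr_ge0 => //; apply: mulr_ge0 => //; apply: ltW.
have irxy : irate r dN (zeta N k x y) x y = (N - k)%:R * (dN + k%:R) * r x y.
  by rewrite /irate !ffunE eqxx [y == x]eq_sym (negbTE xy) eqxx.
have ilow : (N - k)%:R * k%:R * r x y <= irate r dN (zeta N k x y) x y.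
  rewrite irxy; apply: ler_wpM2r; first exact: ltW.
  by apply: ler_wpM2l => //; rewrite lerDr ltW.
have lowp : 0 < (N - k)%:R * k%:R * r x y.
  by rewrite !mulr_gt0 // ltr0n ?subn_gt0.
apply: (le_trans (@ha_step n _ _ x y g _ (sigma_zeta _ kN) _ _ g0 _)).
- by apply: zeta_notEA; rewrite k0.
- by rewrite eq_sym.
- exact: lt_le_trans ilow.
- by move=> a b; apply: irate_zeta_le.
apply: (@le_trans _ _ ((\sum_a \sum_(b | b != a) g a b) / ((N - k)%:R * k%:R * r x y))).
  apply: ler_wpM2l.
    by apply: sumr_ge0 => a _; apply: sumr_ge0 => b _.
  by rewrite lef_pV2 ?posrE // (lt_le_trans lowp).
apply: ler_wpM2r; first by rewrite invr_ge0 ltW.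
apply: (@le_trans _ _ (\sum_a dN * (zeta N k x y a)%:R * Mr)).
  apply: ler_sum => a _; rewrite /g.
  under eq_bigr do rewrite -mulrA.
  rewrite -mulr_sumr -mulrA; apply: ler_wpM2l; first exact: ltW.
  rewrite -mulr_sumr; apply: ler_wpM2l => //.
  apply: (@le_trans _ _ (\sum_b r a b)).
    rewrite [leRHS](bigID (fun b => b != a)) /= lerDl.
    by apply: sumr_ge0 => b _.
  rewrite /Mr [leRHS](bigD1 a) //= lerDl.
  by apply: sumr_ge0 => a' _; apply: sumr_ge0 => b _.
rewrite -mulr_suml -mulr_sumr zeta_sum; last exact: ltnW.
by [].
Qed.


Definition cc k : R := dN * N%:R * Mr / ((N - k)%:R * k%:R * r x y).

Lemma tele j n : (j <= N.-1)%N ->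
  `| f (n + j)%N (zeta N (N - j) x y) - f n (zeta N N x y) | <=
    \sum_(i < j) cc (N - i.+1).
Proof.
elim: j => [|j IH] hj.
  by rewrite big_ord0 addn0 subn0 subrr normr0.
rewrite big_ord_recr /=.
have hk : (0 < N - j.+1 < N)%N by apply/andP; split; lia.
have e : (N - j.+1).+1 = (N - j)%N by lia.
apply: le_trans (ler_distD (f (n + j)%N (zeta N (N - j) x y)) _ _) _.
rewrite addrC lerD //; last exact: IH (ltnW hj).
by rewrite addnS -e; apply: step_zeta.
Qed.

End Aux.

Lemma lim_bound (R : realType) (u v : nat -> R) a b j B :
  u @ \oo --> a -> v @ \oo --> b ->
  (forall m, `| u (m + j)%N - v m | <= B) -> `| a - b | <= B.
Proof.
move=> hu hv hB.
have hu' : [sequence u (m + j)%N]_m @ \oo --> a by rewrite cvg_shiftn.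
have := cvg_norm (cvgB hu' hv).
move=> /(_ _ _) /cvgr_to_le; apply.
by apply: filterE => m; exact: hB.
Qed.

Lemma harm (R : realType) n :
  \sum_(i < n) ((i.+1)%:R : R)^-1 <= 2 * ln (n.+1%:R : R).
Proof.
elim: n => [|n IH]; first by rewrite big_ord0 ln1 mulr0.
rewrite big_ord_recr /=.
have key : ((n.+2)%:R : R)^-1 <= ln (n.+2%:R) - ln (n.+1%:R).
  have h := @le_ln1Dx R (- ((n.+2)%:R)^-1).
  have hx : -1 < - ((n.+2)%:R : R)^-1.
    rewrite ltrN2 invf_lt1 ?ltr0n // ltr1n //.
  have := h hx.
  have -> : 1 - ((n.+2)%:R : R)^-1 = (n.+1)%:R / (n.+2)%:R.
    have nz : ((n.+2)%:R : R) != 0 by rewrite pnatr_eq0.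
    apply: (mulIf nz); rewrite mulrBl divfK // mul1r mulVf //.
    by rewrite -[n.+2]addn1 natrD addrK.
  by rewrite ln_div ?posrE ?ltr0n // -[X in _ -> _ <= X]opprB lerNr.
have h2 : ((n.+1)%:R : R)^-1 <= 2 * ((n.+2)%:R)^-1.
  have hh : ((n.+2)%:R / 2 : R) <= (n.+1)%:R.
    by rewrite ler_pdivrMr // -[2]/(2%:R) -natrM ler_nat; lia.
  have -> : 2 * ((n.+2)%:R : R)^-1 = ((n.+2)%:R / 2)^-1.
    by rewrite invfM invrK mulrC.
  by rewrite lef_pV2 ?posrE ?divr_gt0 ?ltr0n.
apply: le_trans (lerD IH h2) _; rewrite -mulrDr ler_wpM2l // addrC -lerBrDr.
exact: key.
Qed.
Lemma zetaN_xi (S : finType) N (x y : S) : x != y -> zeta N N x y = xi N y.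
Proof.
move=> xy; apply/ffunP => u; rewrite !ffunE.
have [->|ux] := eqVneq u x; first by rewrite subnn (negbTE xy).
by [].
Qed.

Lemma rev_harm (R : realType) n :
  \sum_(i < n) (((n - i)%:R : R)^-1) = \sum_(i < n) ((i.+1)%:R : R)^-1.
Proof.
rewrite -(big_mkord xpredT (fun i => ((i.+1)%:R : R)^-1)) big_rev_mkord subn0.
apply: eq_bigr => i _; congr (_ %:R^-1); have := ltn_ord i; lia.
Qed.

Lemma sum_cc (R : realType) (S : finType) (r : S -> S -> R) dN n (x y : S) :
  0 < r x y ->
  \sum_(i < n) cc R S r dN n.+1 x y (n.+1 - i.+1) =
  dN * Mr R S r / r x y * (\sum_(i < n) ((i.+1)%:R : R)^-1 + \sum_(i < n) ((i.+1)%:R : R)^-1).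
Proof.
move=> rxy; rewrite -{2}(rev_harm R n) -big_split mulr_sumr /=.
apply: eq_bigr => i _; rewrite /cc.
have hi := ltn_ord i.
have e1 : (n.+1 - (n.+1 - i.+1))%N = i.+1 by lia.
have e2 : (n.+1 - i.+1)%N = (n - i)%N by lia.
have e3 : (n.+1%:R : R) = (i.+1)%:R + (n - i)%:R by rewrite -natrD; congr (_%:R); lia.
rewrite e1 e2 e3.
have a0 : ((i.+1)%:R : R) != 0 by rewrite pnatr_eq0.
have b0 : ((n - i)%:R : R) != 0 by rewrite pnatr_eq0; lia.
have c0 : r x y != 0 by rewrite gt_eqF.
field.
have a1 : (1 + i%:R : R) != 0 by rewrite addrC natr1 pnatr_eq0.
by rewrite b0 c0 a1.
Qed.

Theorem lemma4p9 (R : realType) (S : finType) (r : S -> S -> R)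
  (d : nat -> R) (A : {set S}) (w x y : S) :
  (forall a b, 0 <= r a b) -> (forall a, r a a = 0) -> irreducible_rates r ->
  (forall N, 0 < d N) -> d @ \oo --> (0 : R) ->
  w \in A -> x != y -> 0 < r x y -> r y x = 0 ->
  exists C : R, exists N0 : nat,
    forall N : nat, (N0 <= N)%N ->
      `| hitprob r (d N) N A w (zeta N 1 x y) - hitprob r (d N) N A w (xi N y) |
        <= C * (d N * ln (N%:R : R))
   /\ `| hitprob r (d N) N A w (zeta N N.-1 x y) - hitprob r (d N) N A w (xi N y) |
        <= C * d N.
Proof.
move=> r0 _ _ d0 _ _ xy rxy ryx.
have M0 := Mr_ge0 R S r r0.
set M := Mr R S r in M0 *.
exists (4 * M / r x y), 2%N => N hN.
have [n en] : exists n, N = n.+1 by exists N.-1; lia.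
have n1 : (1 <= n)%N by lia.
subst N; rewrite /= -(zetaN_xi S n.+1 x y xy).
have dp := d0 n.+1.
set dN := d n.+1.
have cv := ha_cvg R S r dN n.+1 A w r0 dp.
have K : 0 <= dN * M / r x y by rewrite !mulr_ge0 // ?invr_ge0 ltW.
split.
  apply: (@lim_bound R _ _ _ _ n); [exact: cv| exact: cv|] => m.
  have := tele R S r dN n.+1 A w r0 dp x y xy ryx rxy n m (leqnn n).
  rewrite subSnn /= => h; apply: (le_trans h).
  rewrite sum_cc // -/M.
  have H := harm R n.
  apply: (@le_trans _ _ (dN * M / r x y * (4 * ln n.+1%:R))).
    by apply: ler_wpM2l => //; lra.
  rewrite [leLHS](_ : _ = 4 * M / r x y * (dN * ln n.+1%:R)) //.
  by field; rewrite gt_eqF.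
apply: (@lim_bound R _ _ _ _ 1); [exact: cv| exact: cv|] => m.
have hk : (0 < n < n.+1)%N by rewrite n1 /=.
have := step_zeta R S r dN n.+1 A w r0 dp x y xy ryx rxy m n hk.
rewrite addn1 => h; apply: (le_trans h).
rewrite /cc -/M subSnn mul1r.
have nn : (0 : R) < n%:R by rewrite ltr0n.
have q : (n.+1%:R : R) / n%:R <= 2.
  rewrite ler_pdivrMr // -[2]/(2%:R) -natrM ler_nat; lia.
apply: (@le_trans _ _ (dN * M / r x y * 2)).
  have -> : dN * n.+1%:R * M / (n%:R * r x y) = dN * M / r x y * (n.+1%:R / n%:R).
    by field; rewrite gt_eqF // gt_eqF.
  by apply: ler_wpM2l.
rewrite [leRHS](_ : _ = dN * M / r x y * 4); last by field; rewrite gt_eqF.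
by apply: ler_wpM2l => //; lra.
Qed.
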